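(* For all integers $n\ge1$ and $i\ge1$, the number of partitions $\lambda\vdash n$ in which the part $i$ occurs with multiplicity exactly $i$ equals the number of partitions $\mu\vdash n$ for which there is an index $s$ with $h_{s,1}(\mu)=s$ and $\mu_s=i$.
   Context: A partition $\mu=(\mu_1\ge\cdots\ge\mu_t>0)$ of $n$ has first-column hook lengths $h_{s,1}(\mu)=\mu_s+(t-s)$ for $1\le s\le t$. *)

(* Defs.v *)
From mathcomp Require Import all_boot all_order.
Set Implicit Arguments. Unset Strict Implicit. Unset Printing Implicit Defensive.

(* A partition of n is encoded as a nonincreasing n-tuple of naturals
   (entries in 'I_(n.+1)) summing to n, padded with trailing zeros.
   Its parts are the nonzero entries; part s (1-indexed) is the (s-1)-th entry. *)
Definition parts_of n (t : n.-tuple 'I_n.+1) : seq nat := [seq val x | x <- t].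

Definition is_partition n (t : n.-tuple 'I_n.+1) : bool :=
  sorted geq (parts_of t) && (sumn (parts_of t) == n).

Definition plength n (t : n.-tuple 'I_n.+1) : nat := count (fun x => 0 < x) (parts_of t).

Definition part n (t : n.-tuple 'I_n.+1) (s : nat) : nat := nth 0 (parts_of t) s.-1.

Definition hook1 n (t : n.-tuple 'I_n.+1) (s : nat) : nat := part t s + (plength t - s).

Definition mult n (t : n.-tuple 'I_n.+1) (i : nat) : nat := count_mem i (parts_of t).

(* Main.v *)
Require Import Defs.
From mathcomp Require Import all_boot all_order.
From mathcomp Require Import zify.
Set Implicit Arguments. Unset Strict Implicit. Unset Printing Implicit Defensive.

Ltac clean := repeat match goal with
  | H : is_true (all _ _) |- _ => clear H
  | H : is_true (sorted _ _) |- _ => clear H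
  | H : is_true (path _ _ _) |- _ => clear H
  | H : forall _, _ |- _ => clear H
  end.
Ltac lia' := clean; lia.

Lemma geq_tr : transitive geq.
Proof. by move=> y x z /= h1 h2; apply: leq_trans h2 h1. Qed.

Lemma sorted_consE x s : sorted geq (x :: s) = all (fun y => y <= x) s && sorted geq s.
Proof. by rewrite /= (path_sortedE geq_tr). Qed.

Fixpoint split (b : nat) (A B : seq nat) : seq nat * seq nat :=
  match A with
  | [::] => ([::], [::])
  | a :: A' =>
    match B with
    | be :: B' => if be == b then ((a + be) :: (split b A' B').1, (split b A' B').2)
                  else ((split b.-1 A' B).1, a :: (split b.-1 A' B).2)
    | [::] => ((split b.-1 A' [::]).1, a :: (split b.-1 A' [::]).2)
    end
  end.

Fixpoint mergef (f b : nat) (C R : seq nat) : seq nat * seq nat :=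
  match f with
  | 0 => ([::], [::])
  | f'.+1 =>
    match C with
    | [::] => (R, [::])
    | c :: C' =>
      match R with
      | r :: R' => if c - b < r then (r :: (mergef f' b.-1 C R').1, (mergef f' b.-1 C R').2)
                   else ((c - b) :: (mergef f' b C' R).1, b :: (mergef f' b C' R).2)
      | [::] => ((c - b) :: (mergef f' b C' [::]).1, b :: (mergef f' b C' [::]).2)
      end
    end
  end.

Lemma split_nil b A : split b A [::] = ([::], A).
Proof. by elim: A b => //= a A IH b; rewrite IH. Qed.

Lemma split_bound b A B u v : all (fun x => x <= u) A -> all (fun x => x <= v) B ->
  all (fun x => x <= u + v) (split b A B).1 /\ all (fun x => x <= u) (split b A B).2.
Proof.
elim: A b B => [|a A IH] b B /=; first by move=> *; split.
move=> /andP[ha hA] hB.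
case: B hB => [|be B] /=.
  by move=> _; have [h1 h2] := IH b.-1 [::] hA isT; rewrite h1 ha h2.
move=> hB0; move: (hB0) => /andP[hbe hB]; case: ifP => _ /=.
  have [h1 h2] := IH b B hA hB; rewrite h1 h2 andbT; split=> //; lia'.
have [h1 h2] := IH b.-1 (be :: B) hA hB0.
by rewrite h1 ha h2.
Qed.

Lemma split_size b A B : all (fun x => 0 < x) B -> all (fun x => x <= b) B -> sorted geq B ->
  size A = size B + b.-1 -> 0 < b ->
  size (split b A B).1 = size B /\ size (split b A B).2 = b.-1.
Proof.
elim: A b B => [|a A IH] b B hpos hle hs hsz hb /=.
  by case: B hsz {hpos hle hs} => /= [|x B] hsz; split; lia'.
case: B hpos hle hs hsz => [|be B] /=.
  move=> _ _ _ hsz; rewrite split_nil /=; split; lia'.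
move=> hpos0 hle0 hs hsz; move: (hpos0) (hle0) => /andP[hbe hpos] /andP[hbb hle].
case: ifP => /eqP heq /=.
  have [h1 h2] := IH b B hpos hle (path_sorted hs) ltac:(lia') hb; rewrite h1 h2; split; lia'.
have hs' := hs; rewrite -/(sorted geq (be :: B)) sorted_consE in hs'.
case/andP: hs' => hall _.
have hle1 : all (fun x => x <= b.-1) (be :: B).
  apply/andP; split; first by lia'.
  by apply/allP => x hx; have := allP hall x hx; lia'.
have [h1 h2] := IH b.-1 (be :: B) hpos0 hle1 hs ltac:(simpl; lia') ltac:(lia').
rewrite h1 h2 /=; split; lia'.
Qed.

Lemma mergef_C f b c C R : head 0 R <= c - b ->
  mergef f.+1 b (c :: C) R = ((c - b) :: (mergef f b C R).1, b :: (mergef f b C R).2).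
Proof.
case: R => [|r R] //= hr; rewrite ltnNge hr //.
Qed.

Lemma mergef_R f b c C r R : c - b < r ->
  mergef f.+1 b (c :: C) (r :: R) = (r :: (mergef f b.-1 (c :: C) R).1, (mergef f b.-1 (c :: C) R).2).
Proof. by move=> h /=; rewrite h. Qed.

Lemma split_cons_eq b a A B : split b (a :: A) (b :: B) = ((a + b) :: (split b A B).1, (split b A B).2).
Proof. by rewrite /= eqxx. Qed.

Lemma split_cons_neq b a A be B : be != b ->
  split b (a :: A) (be :: B) = ((split b.-1 A (be :: B)).1, a :: (split b.-1 A (be :: B)).2).
Proof. by move=> h /=; rewrite (negbTE h). Qed.

Lemma merge_split A f b B : sorted geq A -> all (fun x => 0 < x) A -> sorted geq B ->
  all (fun x => 0 < x) B -> all (fun x => x <= b) B -> size A = size B + b.-1 -> 0 < b ->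
  size A <= f -> mergef f b (split b A B).1 (split b A B).2 = (A, B).
Proof.
elim: A f b B => [|a A IH] f b B hsA hpA hsB hpB hlB hsz hb hf.
  by case: B hsz {hsB hpB hlB} => //= _; case: f {hf}.
case: f hf => [|f] // hf.
move: hsA; rewrite sorted_consE => /andP[hallA hsA].
move: hpA => /andP[ha hpA].
case: B hsB hpB hlB hsz => [|be B] hsB hpB hlB hsz.
  by rewrite split_nil.
move: (hsB); rewrite sorted_consE => /andP[hallB hsB'].
move: (hpB) (hlB) => /andP[hbe hpB'] /andP[hbb hlB'].
case: (eqVneq be b) => heq.
  subst be; rewrite split_cons_eq.
  have [_ hR'] := @split_bound b A B a b hallA hallB.
  rewrite mergef_C; last first.
    by case: (split b A B).2 hR' => //= r R /andP[hr _]; lia'.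
  rewrite (IH f b B hsA hpA hsB' hpB' hlB' ltac:(move: hsz => /=; lia') hb ltac:(move: hf => /=; lia')).
  by rewrite addnK.
rewrite split_cons_neq //.
have hlB1 : all (fun x => x <= b.-1) (be :: B).
  apply/andP; split; first by move: heq => /eqP; lia'.
  by apply/allP => x hx; have := allP hallB x hx; lia'.
have hbe' : be < b by rewrite ltn_neqAle heq hbb.
have hszA : size A = (size B).+1 + b.-1.-1 by move: hsz => /=; lia'.
have hfA : size A <= f by move: hf => /=; lia'.
have hb1 : 0 < b.-1 by lia'.
have [hsC _] := @split_size b.-1 A (be :: B) hpB hlB1 hsB hszA hb1.
have [hC hR] := @split_bound b.-1 A (be :: B) a be hallA
   ltac:(by rewrite /= leqnn hallB).
have IH' := IH f b.-1 (be :: B) hsA hpA hsB hpB hlB1 hszA hb1 hfA.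
move: IH' hsC hC hR.
case: (split b.-1 A (be :: B)) => C R.
case: C => [|c C] IH' hsC hC hR; first by [].
cbn [fst snd] in IH', hC, hR |- *.
move: hC => /andP[hc hC].
rewrite mergef_R; last by lia'.
by rewrite IH'.
Qed.

Lemma split_cons_ne b a A B : (B == [::]) || (head 0 B != b) ->
  split b (a :: A) B = ((split b.-1 A B).1, a :: (split b.-1 A B).2).
Proof. by case: B => [|be B] //= h; rewrite (negbTE h). Qed.

Lemma mergeB_le f b C R : all (fun x => x <= b) (mergef f b C R).2.
Proof.
elim: f b C R => [|f IH] b [|c C] [|r R] //=.
- by rewrite leqnn; apply: IH.
- case: ifP => _ /=; last by rewrite leqnn; apply: IH.
  by apply/allP => x hx; have := allP (IH b.-1 (c :: C) R) x hx; lia'.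
Qed.

Lemma split_merge f b C R : all (fun c => b <= c) C -> size R = b.-1 -> 0 < b ->
  size C + size R <= f -> split b (mergef f b C R).1 (mergef f b C R).2 = (C, R).
Proof.
elim: f b C R => [|f IH] b C R hC hR hb hf.
  by case: C hf {hC} => //; case: R hR {hb} => //.
case: C hC hf => [|c C] hC hf; first by rewrite /= split_nil.
move: hC => /andP[hc hC].
case: R hR hf => [|r R] hR hf.
  have hf' : size C + size (@nil nat) <= f by move: hf => /=; lia'.
  rewrite mergef_C //; cbn [fst snd]; rewrite split_cons_eq (IH b C [::] hC hR hb hf').
  by rewrite subnK.
case: (ltnP (c - b) r) => hcr.
  rewrite mergef_R //.
  have hB := mergeB_le f b.-1 (c :: C) R.
  rewrite split_cons_ne; last first.
    case: (mergef f b.-1 (c :: C) R).2 hB => //= be B /andP[hbe _].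
    apply/eqP => e; subst be; move: hR hbe => /=; lia'.
  rewrite (IH b.-1 (c :: C) R) //.
  - apply/andP; split; first by lia'.
    by apply/allP => x hx; have := allP hC x hx; lia'.
  - move: hR => /=; lia'.
  - move: hR => /=; lia'.
  - move: hf => /=; lia'.
rewrite mergef_C //; cbn [fst snd]; rewrite split_cons_eq (IH b C (r :: R)) //.
- by rewrite subnK.
Qed.

Lemma mergef_size f b C R : size C + size R <= f ->
  size (mergef f b C R).1 = size C + size R /\ size (mergef f b C R).2 = size C.
Proof.
elim: f b C R => [|f IH] b C R hf.
  by case: C R hf => [|c C] [|r R] //= hf; split; lia'.
case: C hf => [|c C] hf; first by rewrite /=; split; lia'.
case: R hf => [|r R] hf.
  have [h1 h2] := IH b C [::] ltac:(rewrite /= in hf *; lia').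
  by rewrite mergef_C //=; rewrite h1 h2 /=; split; lia'.
case: (ltnP (c - b) r) => hcr.
  have [h1 h2] := IH b.-1 (c :: C) R ltac:(rewrite /= in hf *; lia').
  by rewrite mergef_R //=; rewrite h1 h2 /=; split; lia'.
have [h1 h2] := IH b C (r :: R) ltac:(rewrite /= in hf *; lia').
by rewrite mergef_C //=; rewrite h1 h2 /=; split; lia'.
Qed.

Lemma mergef_sum f b C R : all (fun c => b <= c) C -> size C + size R <= f ->
  sumn (mergef f b C R).1 + sumn (mergef f b C R).2 = sumn C + sumn R.
Proof.
elim: f b C R => [|f IH] b C R hC hf.
  by case: C R hf {hC} => [|c C] [|r R] //= hf; lia'.
case: C hC hf => [|c C] hC hf; first by rewrite /=; lia'.
move: (hC) => /andP[hc hC'].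
case: R hf => [|r R] hf.
  have h := IH b C [::] hC' ltac:(rewrite /= in hf *; lia').
  by rewrite mergef_C //=; move: h => /=; lia'.
case: (ltnP (c - b) r) => hcr.
  have hC2 : all (fun x => b.-1 <= x) (c :: C).
    by apply/allP => x hx; have := allP hC x hx; lia'.
  have h := IH b.-1 (c :: C) R hC2 ltac:(rewrite /= in hf *; lia').
  by rewrite mergef_R //=; move: h => /=; lia'.
have h := IH b C (r :: R) hC' ltac:(rewrite /= in hf *; lia').
by rewrite mergef_C //=; move: h => /=; lia'.
Qed.

Lemma mergeA_ge lo f b C R : all (fun c => lo < c) C -> all (fun r => lo <= r) R ->
  size R = b.-1 -> 0 < b -> all (fun a => lo <= a) (mergef f b C R).1.
Proof.
elim: f b C R => [|f IH] b C R hC hR hs hb //.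
case: C hC => [|c C] hC //.
move: (hC) => /andP[hc hC'].
case: R hR hs => [|r R] hR hs.
  rewrite mergef_C //=; apply/andP; split; first by move: hs => /=; lia'.
  by apply: IH.
move: (hR) => /andP[hr hR'].
case: (ltnP (c - b) r) => hcr.
  rewrite mergef_R //=; rewrite hr /=; apply: IH => //; move: hs => /=; lia'.
rewrite mergef_C //=; apply/andP; split; first by lia'.
by apply: IH.
Qed.

Lemma mergeB_pos f b C R : size R = b.-1 -> 0 < b -> all (fun x => 0 < x) (mergef f b C R).2.
Proof.
elim: f b C R => [|f IH] b C R hs hb //.
case: C => [|c C] //.
case: R hs => [|r R] hs.
  by rewrite mergef_C //= hb; apply: IH.
case: (ltnP (c - b) r) => hcr.
  rewrite mergef_R //=; apply: IH => //; move: hs => /=; lia'.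
by rewrite mergef_C //= hb; apply: IH.
Qed.

Lemma mergeB_sorted f b C R : sorted geq (mergef f b C R).2.
Proof.
elim: f b C R => [|f IH] b C R //.
case: C => [|c C] //.
case: R => [|r R].
  by rewrite mergef_C //= -/(sorted geq (b :: _)) sorted_consE IH mergeB_le.
case: (ltnP (c - b) r) => hcr.
  by rewrite mergef_R //=.
by rewrite mergef_C //= -/(sorted geq (b :: _)) sorted_consE IH mergeB_le.
Qed.

Lemma mergeA_bound f b C R : sorted geq C -> sorted geq R ->
  all (fun a => a <= maxn (head 0 R) (head 0 C - b)) (mergef f b C R).1.
Proof.
elim: f b C R => [|f IH] b C R hC hR //.
case: C hC => [|c C] hC.
  case: R hR => [|r R] //= hR; move: hR; rewrite -/(sorted geq (r :: R)) sorted_consE => /andP[hR _].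
  rewrite leq_maxl /=; apply/allP => x hx; have := allP hR x hx; lia'.
move: (hC); rewrite sorted_consE => /andP[hCa hC'].
case: R hR => [|r R] hR.
  rewrite mergef_C //=; apply/andP; split; first by lia'.
  apply/allP => x hx; have := allP (IH b C [::] hC' isT) x hx.
  case: C hC hCa {hC' IH hx} => [|c' C] /=; first by lia'.
  move=> _ /andP[hc' _]; lia'.
move: (hR); rewrite sorted_consE => /andP[hRa hR'].
case: (ltnP (c - b) r) => hcr.
  rewrite mergef_R //=; apply/andP; split; first by lia'.
  apply/allP => x hx; have := allP (IH b.-1 (c :: C) R hC hR') x hx.
  case: R hR hRa {hR' IH hx} => [|r' R] /=; first by lia'.
  move=> _ /andP[hr' _]; lia'.
rewrite mergef_C //=; apply/andP; split; first by lia'.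
apply/allP => x hx; have := allP (IH b C (r :: R) hC' hR) x hx.
case: C hC hCa {hC' IH hx} => [|c' C] /=; first by lia'.
move=> _ /andP[hc' _]; lia'.
Qed.

Lemma mergeA_sorted f b C R : sorted geq C -> sorted geq R -> sorted geq (mergef f b C R).1.
Proof.
elim: f b C R => [|f IH] b C R hC hR //.
case: C hC => [|c C] hC //.
move: (hC); rewrite sorted_consE => /andP[hCa hC'].
case: R hR => [|r R] hR.
  rewrite mergef_C //= -/(sorted geq (_ :: _)) sorted_consE IH // andbT.
  apply/allP => x hx; have := allP (mergeA_bound f b hC' hR) x hx.
  case: C hC hCa {hC' IH hx} => [|c' C] /=; first by lia'.
  move=> _ /andP[hc' _]; lia'.
move: (hR); rewrite sorted_consE => /andP[hRa hR'].
case: (ltnP (c - b) r) => hcr.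
  rewrite mergef_R //= -/(sorted geq (_ :: _)) sorted_consE IH // andbT.
  apply/allP => x hx; have := allP (mergeA_bound f b.-1 hC hR') x hx.
  case: R hR hRa {hR' IH hx} => [|r' R] /=; first by lia'.
  move=> _ /andP[hr' _]; lia'.
rewrite mergef_C //= -/(sorted geq (_ :: _)) sorted_consE IH // andbT.
apply/allP => x hx; have := allP (mergeA_bound f b hC' hR) x hx.
case: C hC hCa {hC' IH hx} => [|c' C] /=; first by lia'.
move=> _ /andP[hc' _]; lia'.
Qed.

Lemma splitC_sorted b A B : sorted geq A -> sorted geq B -> sorted geq (split b A B).1.
Proof.
elim: A b B => [|a A IH] b B hA hB //.
move: (hA); rewrite sorted_consE => /andP[hAa hA'].
case: B hB => [|be B] hB; first by rewrite split_nil.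
move: (hB); rewrite sorted_consE => /andP[hBa hB'].
case: (eqVneq be b) => heq.
  subst be; rewrite split_cons_eq /= -/(sorted geq (_ :: _)) sorted_consE IH // andbT.
  by have [] := @split_bound b A B a b hAa hBa.
by rewrite split_cons_neq //=; apply: IH.
Qed.

Lemma splitR_bound b A B u : all (fun x => x <= u) A -> all (fun x => x <= u) (split b A B).2.
Proof.
elim: A b B => [|a A IH] b B //= /andP[ha hA].
case: B => [|be B] /=; first by rewrite ha IH.
by case: ifP => _ /=; rewrite ?ha IH.
Qed.

Lemma splitR_ge b A B u : all (fun x => u <= x) A -> all (fun x => u <= x) (split b A B).2.
Proof.
elim: A b B => [|a A IH] b B //= /andP[ha hA].
case: B => [|be B] /=; first by rewrite ha IH.
by case: ifP => _ /=; rewrite ?ha IH.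
Qed.

Lemma splitC_ge b A B u : all (fun x => u <= x) A -> all (fun x => 0 < x) B ->
  all (fun x => u < x) (split b A B).1.
Proof.
elim: A b B => [|a A IH] b B //= /andP[ha hA] hB.
case: B hB => [|be B] /= hB; first by apply: IH.
move: (hB) => /andP[hbe hB'].
case: ifP => _ /=; last by apply: IH.
by rewrite IH // andbT; lia'.
Qed.

Lemma split_sum b A B : all (fun x => 0 < x) B -> all (fun x => x <= b) B -> sorted geq B ->
  size A = size B + b.-1 -> 0 < b ->
  sumn (split b A B).1 + sumn (split b A B).2 = sumn A + sumn B.
Proof.
elim: A b B => [|a A IH] b B hpos hle hs hsz hb.
  by case: B hsz {hpos hle hs} => /= [|x B] hsz; lia'.
case: B hpos hle hs hsz => [|be B] hpos hle hs hsz.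
  rewrite split_nil /=; lia'.
move: (hpos) (hle) => /andP[hbe hpos'] /andP[hbb hle'].
case: (eqVneq be b) => heq.
  subst be; rewrite split_cons_eq /=.
  have := IH b B hpos' hle' (path_sorted hs) ltac:(move: hsz => /=; lia') hb; lia'.
rewrite split_cons_neq //=.
have hs' := hs; rewrite sorted_consE in hs'.
case/andP: hs' => hall _.
have hlB1 : all (fun x => x <= b.-1) (be :: B).
  apply/andP; split; first by move: heq => /eqP; lia'.
  by apply/allP => x hx; have := allP hall x hx; lia'.
have := IH b.-1 (be :: B) hpos hlB1 hs ltac:(move: hsz => /=; lia') ltac:(move: heq => /eqP; lia').
move=> /= h; lia'.
Qed.

Lemma splitR_sorted b A B : sorted geq A -> sorted geq (split b A B).2.
Proof.
elim: A b B => [|a A IH] b B hA //.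
move: (hA); rewrite sorted_consE => /andP[hAa hA'].
case: B => [|be B]; first by rewrite split_nil.
case: (eqVneq be b) => heq.
  by subst be; rewrite split_cons_eq /=; apply: IH.
rewrite split_cons_neq //= -/(sorted geq (_ :: _)) sorted_consE IH // andbT.
exact: splitR_bound.
Qed.

Definition RofD (i : nat) (D : seq nat) : seq nat :=
  [seq i + count (fun d => y <= d) D | y <- iota 1 i.-1].
Definition gR (i : nat) (R : seq nat) (y : nat) : nat :=
  nth 0 (R ++ [:: i]) y.-1 - nth 0 (R ++ [:: i]) y.
Definition DofR (i : nat) (R : seq nat) : seq nat :=
  sort geq (flatten [seq nseq (gR i R y) y | y <- iota 1 i.-1]).

Lemma geq_refl : reflexive geq. Proof. by move=> x /=. Qed.
Lemma geq_total : total geq. Proof. by move=> x y /=; rewrite leq_total. Qed.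
Lemma geq_anti : antisymmetric geq.
Proof. by move=> x y /andP[h1 h2]; apply: anti_leq; rewrite /= in h1 h2; rewrite h1 h2. Qed.

Lemma DofR_sorted i R : sorted geq (DofR i R).
Proof. rewrite /DofR; apply: sort_sorted; exact: geq_total. Qed.

Lemma size_RofD i D : size (RofD i D) = i.-1.
Proof. by rewrite size_map size_iota. Qed.

Lemma RofD_ge i D : all (fun x => i <= x) (RofD i D).
Proof. by apply/allP => x /mapP[y _ ->]; apply: leq_addr. Qed.

Lemma RofD_sorted i D : sorted geq (RofD i D).
Proof.
apply: (homo_sorted (e := leq)); last exact: iota_sorted.
move=> x y hxy /=; rewrite leq_add2l; apply: sub_count => d /= h.
exact: leq_trans hxy h.
Qed.

Lemma sumn_addmap (s : seq nat) a (g : nat -> nat) :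
  sumn [seq a + g y | y <- s] = a * size s + sumn [seq g y | y <- s].
Proof. elim: s => [|y s IH] /=; first by rewrite muln0. rewrite IH; lia'. Qed.

Lemma count_le_iota d k : d <= k -> count (fun y => y <= d) (iota 1 k) = d.
Proof.
move=> hdk; rewrite -(subnKC hdk) iotaD count_cat.
rewrite (@eq_in_count _ _ predT); last by move=> y; rewrite mem_iota => /andP[_ h]; rewrite /= -ltnS.
rewrite (@eq_in_count _ _ pred0 (iota (1 + d) _)); last first.
  by move=> y; rewrite mem_iota => /andP[h _] /=; apply/negbTE; rewrite -ltnNge.
by rewrite count_predT count_pred0 size_iota addn0.
Qed.

Lemma sumn_count_iota k D : all (fun d => d <= k) D ->
  sumn [seq count (fun d => y <= d) D | y <- iota 1 k] = sumn D.
Proof.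
elim: D => [|d D IH] /=; first by elim: (iota 1 k) => //=.
move=> /andP[hd hD]; rewrite -IH //.
have -> : sumn [seq (y <= d) + count (fun d => y <= d) D | y <- iota 1 k] =
          sumn [seq nat_of_bool (y <= d) | y <- iota 1 k] + sumn [seq count (fun d => y <= d) D | y <- iota 1 k].
  by elim: (iota 1 k) => //= y s ->; lia'.
by rewrite sumn_count count_le_iota.
Qed.

Lemma sumn_RofD i D : all (fun d => d <= i.-1) D -> sumn (RofD i D) = i * i.-1 + sumn D.
Proof. by move=> h; rewrite /RofD sumn_addmap size_iota sumn_count_iota. Qed.

Lemma count_flatten_nseq (p : pred nat) (g : nat -> nat) s :
  count p (flatten [seq nseq (g y) y | y <- s]) = sumn [seq p y * g y | y <- s].
Proof. by elim: s => //= y s IH; rewrite count_cat IH count_nseq. Qed.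

Lemma sumn_pred1 (g : nat -> nat) s x : uniq s ->
  sumn [seq (y == x) * g y | y <- s] = (x \in s) * g x.
Proof.
elim: s => //= y s IH /andP[hy hs]; rewrite IH // in_cons.
case: (eqVneq y x) => [<-|hne].
  by rewrite ?eqxx (negbTE hy) /=; lia'.
have hne' : (x == y) = false by rewrite eq_sym; apply/negbTE.
by rewrite ?(negbTE hne) ?hne' /=.
Qed.

Lemma count_split x D : count (fun d => x <= d) D = count_mem x D + count (fun d => x < d) D.
Proof.
elim: D => //= d D ->.
have -> : nat_of_bool (x <= d) = (d == x) + (x < d).
  by rewrite leq_eqVlt eq_sym; case: eqP => //= ->; rewrite ltnn.
lia'.
Qed.

Lemma DofR_RofD i D : sorted geq D -> all (fun d => 0 < d <= i.-1) D -> DofR i (RofD i D) = D.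
Proof.
move=> hs hD.
apply: (sorted_eq geq_tr geq_anti); [exact: DofR_sorted | exact: hs |].
rewrite /DofR perm_sort; apply/allP => x _; apply/eqP.
rewrite count_flatten_nseq sumn_pred1 ?iota_uniq // mem_iota.
case: (boolP (1 <= x < 1 + i.-1)) => hx /=.
  rewrite mul1n /gR.
  have hsz := size_RofD i D.
  rewrite nth_cat hsz ifT; last by lia'.
  rewrite /RofD (nth_map 0); last by rewrite size_iota; lia'.
  rewrite nth_iota; last by lia'.
  rewrite nth_cat size_map size_iota.
  case: ifP => hx2.
    rewrite (nth_map 0); last by rewrite size_iota.
    rewrite nth_iota // (_ : 1 + x.-1 = x); last by lia'.
    by rewrite (count_split x) (_ : count (fun d => x < d) D = count [eta leq (1 + x)] D) // subnDl addnK.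
  rewrite (_ : x - i.-1 = 0); last by lia'.
  rewrite /= addKn (_ : 1 + x.-1 = x); last by lia'.
  rewrite (count_split x) (@eq_in_count _ (fun d => x < d) pred0); first by rewrite count_pred0 addn0.
  move=> d hd /=; have := allP hD d hd; lia'.
apply/esym/count_memPn; apply/negP => hxD; have := allP hD x hxD; move: hx; lia'.
Qed.

Lemma telescope (F : nat -> nat) m n :
  (forall z1 z2, m <= z1 -> z1 <= z2 -> z2 <= m + n -> F z2 <= F z1) ->
  sumn [seq F y.-1 - F y | y <- iota m.+1 n] = F m - F (m + n).
Proof.
elim: n m => [|n IH] m hF /=; first by rewrite addn0 subnn.
rewrite IH; last by move=> z1 z2 h1 h2 h3; apply: hF; lia'.
have h1 := hF m m.+1 (leqnn _) (leqnSn _) ltac:(lia').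
have h2 := hF m.+1 (m.+1 + n) (leqnSn _) ltac:(lia') ltac:(lia').
rewrite (_ : m.+1 + n = m + n.+1) in h2 *; last by lia'.
lia'.
Qed.

Lemma RofD_DofR i R : sorted geq R -> size R = i.-1 -> all (fun r => i <= r) R ->
  RofD i (DofR i R) = R.
Proof.
move=> hs hsz hR.
apply: (@eq_from_nth _ 0); first by rewrite size_RofD hsz.
move=> j; rewrite size_RofD => hj.
rewrite /RofD (nth_map 0); last by rewrite size_iota.
rewrite nth_iota // add1n.
rewrite /DofR (permP (permEl (perm_sort geq _))) count_flatten_nseq.
have hsplit : iota 1 i.-1 = iota 1 j ++ iota j.+1 (i.-1 - j).
  by rewrite -[j.+1]add1n -iotaD subnKC // ltnW.
rewrite hsplit map_cat sumn_cat.
have -> : sumn [seq (j.+1 <= y) * gR i R y | y <- iota 1 j] = 0.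
  have -> : [seq (j.+1 <= y) * gR i R y | y <- iota 1 j] = [seq 0 | y <- iota 1 j].
    apply/eq_in_map => y; rewrite mem_iota => /andP[_ h] /=.
    by rewrite leqNgt (_ : y < j.+1) //; lia'.
  by elim: (iota 1 j) => //.
have -> : [seq (j.+1 <= y) * gR i R y | y <- iota j.+1 (i.-1 - j)] =
          [seq gR i R y | y <- iota j.+1 (i.-1 - j)].
  by apply/eq_in_map => y; rewrite mem_iota => /andP[h _]; rewrite h mul1n.
rewrite /gR telescope.
- rewrite subnKC; last by lia'.
  rewrite [nth 0 _ i.-1]nth_cat hsz ltnn subnn /= nth_cat hsz hj.
  have hj' : j < size R by rewrite hsz.
  have := allP hR (nth 0 R j) (mem_nth 0 hj'); rewrite /=; lia'.
- move=> z1 z2 h1 h2 h3.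
  have hsR : sorted geq (R ++ [:: i]).
    case: R hs hR {hsz hj h1 h2 h3 hsplit} => //= r R hs hR.
    rewrite cat_path hs /= andbT.
    have hR2 : all [eta leq i] (r :: R) := hR.
    by move/allP: hR2; apply; apply: mem_last.
  apply: (sorted_leq_nth geq_tr geq_refl 0 hsR) => //;
   rewrite inE size_cat hsz /=; lia'.
Qed.

Lemma DofR_range i R : all (fun d => 0 < d <= i.-1) (DofR i R).
Proof.
apply/allP => d; rewrite /DofR mem_sort => /flatten_mapP[y hy].
move/nseqP => [-> _]; move: hy; rewrite mem_iota; lia'.
Qed.

Definition Phi (i : nat) (mu : seq nat) : seq nat :=
  let s := (size mu + i)./2 in
  let p := split i (take s.-1 mu) (drop s mu) in
  sort geq (p.1 ++ nseq i i ++ DofR i p.2).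

Definition Psi (i : nat) (la : seq nat) : seq nat :=
  let C := [seq x <- la | i < x] in
  let p := mergef (size C + i) i C (RofD i [seq x <- la | x < i]) in
  p.1 ++ i :: p.2.

Definition Lv n i (la : seq nat) : Prop :=
  [/\ sorted geq la, all (fun x => 0 < x) la, sumn la = n & count_mem i la = i].
Definition Mv n i (mu : seq nat) : Prop :=
  [/\ sorted geq mu, all (fun x => 0 < x) mu, sumn mu = n &
      exists A B, mu = A ++ i :: B /\ size A = size B + i.-1].

Lemma sorted_split_filter (p : pred nat) s :
  (forall x y, y <= x -> p y -> p x) -> sorted geq s ->
  s = [seq x <- s | p x] ++ [seq x <- s | ~~ p x].
Proof.
move=> hp; elim: s => //= x s IH; rewrite (path_sortedE geq_tr) => /andP[hx hs].
case: (boolP (p x)) => hpx /=; first by rewrite -IH.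
have h0 : [seq x <- s | p x] = [::].
  apply/eqP; rewrite -[_ == _]negbK -has_filter; apply/hasPn => y hy.
  by apply/negP => hpy; move: hpx; rewrite (hp x y _ hpy) //; have := allP hx y hy.
rewrite h0 /=; congr (_ :: _); apply/esym/all_filterP; apply/allP => y hy.
by apply/negP => hpy; move: hpx; rewrite (hp x y _ hpy) //; have := allP hx y hy.
Qed.

Lemma filter_pred1_nseq (x : nat) s : [seq y <- s | y == x] = nseq (count_mem x s) x.
Proof. by elim: s => //= y s ->; case: eqP => [->|]. Qed.

Lemma sorted_cat_mid A x B :
  sorted geq (A ++ x :: B) <->
  [/\ sorted geq A, sorted geq B, all (fun a => x <= a) A & all (fun b => b <= x) B].
Proof.
elim: A => [|a A IH] /=.
  rewrite -/(sorted geq (x :: B)) sorted_consE; split.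
    by case/andP=> h1 h2; split.
  by case=> _ h2 _ h4; rewrite h2 h4.
rewrite -/(sorted geq (a :: (A ++ x :: B))) sorted_consE all_cat /=.
rewrite -/(sorted geq (a :: A)) sorted_consE.
split.
  case/andP => /and3P[hA hx hB] hs.
  have [h1 h2 h3 h4] := IH.1 hs.
  split => //; first by rewrite hA.
  rewrite hx /=; apply/allP => y hy; have := allP h3 y hy; lia'.
case => /andP[hA h1] h2 /andP[hx h3] h4.
rewrite hA hx /= IH.2 // andbT.
apply/allP => y hy; have := allP h4 y hy; lia'.
Qed.

Lemma la_decomp i la : sorted geq la ->
  la = [seq x <- la | i < x] ++ nseq (count_mem i la) i ++ [seq x <- la | x < i].
Proof.
move=> hs.
rewrite {1}(@sorted_split_filter (fun x => i < x) la) //; last by move=> x y hxy hy; lia'.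
congr (_ ++ _).
have hs2 : sorted geq [seq x <- la | ~~ (i < x)] by exact: sorted_filter geq_tr _ _ hs.
rewrite {1}(@sorted_split_filter (fun x => i <= x) _ _ hs2); last by move=> x y hxy hy; lia'.
rewrite -!filter_predI -filter_pred1_nseq.
congr (_ ++ _); apply: eq_filter => x /=; case: ltngtP => //.
Qed.

Lemma Psi_ok n i la : 0 < i -> Lv n i la -> Mv n i (Psi i la) /\ Phi i (Psi i la) = la.
Proof.
move=> hi [hs hpos hsum hcnt].
set C := [seq x <- la | i < x]; set D := [seq x <- la | x < i].
have hdec := la_decomp i hs; rewrite hcnt -/C -/D in hdec.
set R := RofD i D.
have hsC : sorted geq C by exact: sorted_filter geq_tr _ _ hs.
have hsD : sorted geq D by exact: sorted_filter geq_tr _ _ hs.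
have hCg : all (fun c => i < c) C by apply/allP => x; rewrite mem_filter => /andP[].
have hDr : all (fun d => 0 < d <= i.-1) D.
  apply/allP => x; rewrite mem_filter => /andP[h1 h2]; have := allP hpos x h2; lia'.
have hDle : all (fun d => d <= i.-1) D by apply/allP => x hx; have := allP hDr x hx; lia'.
have hsR : sorted geq R := RofD_sorted i D.
have hszR : size R = i.-1 := size_RofD i D.
have hRg : all (fun r => i <= r) R := RofD_ge i D.
have hf : size C + size R <= size C + i by lia'.
have [hszA hszB] := mergef_size i hf.
have hCb : all (fun c => i <= c) C by apply/allP => x hx; have := allP hCg x hx; lia'.
have hsum2 := mergef_sum hCb hf.
have hAg := mergeA_ge (size C + i) hCg hRg hszR hi.
have hBp := mergeB_pos (size C + i) C hszR hi.
have hBl := mergeB_le (size C + i) i C R.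
have hAs := mergeA_sorted (size C + i) i hsC hsR.
have hBs := mergeB_sorted (size C + i) i C R.
rewrite /Psi -/C -/D -/R.
set A := (mergef _ _ _ _).1 in hszA hsum2 hAg hAs *.
set B := (mergef _ _ _ _).2 in hszB hsum2 hBp hBl hBs *.
split.
  split.
  - by apply/sorted_cat_mid; split.
  - rewrite all_cat; apply/andP; split; last by rewrite /= hi.
    apply/allP => x hx; have := allP hAg x hx; lia'.
  - rewrite sumn_cat /=.
    have hRs := sumn_RofD hDle.
    rewrite -hsum hdec !sumn_cat sumn_nseq.
    rewrite -/R in hRs; move: hsum2 hRs; clear; nia.
  - by exists A, B; split => //; rewrite hszA hszB hszR.
rewrite /Phi size_cat /= hszA hszB hszR.
have -> : (size C + i.-1 + (size C).+1 + i)./2 = size C + i.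
  have e : size C + i.-1 + (size C).+1 + i = (size C + i).*2 by rewrite -addnn; lia'.
  by rewrite e doubleK.
have hA : size A = (size C + i).-1 by rewrite hszA hszR; lia'.
rewrite -hA take_size_cat //.
have hd : size C + i = size (A ++ [:: i]) by rewrite size_cat hA /=; lia'.
have hmu : A ++ i :: B = (A ++ [:: i]) ++ B by rewrite -catA.
rewrite hd hmu drop_size_cat //.
rewrite /A /B split_merge //.
rewrite DofR_RofD //.
by rewrite -hdec sorted_sort //; exact: geq_tr.
Qed.

Lemma filter_nil_all (p : pred nat) s : all (fun x => ~~ p x) s -> [seq x <- s | p x] = [::].
Proof. by elim: s => //= x s IH /andP[h1 h2]; rewrite (negbTE h1) IH. Qed.

Lemma Phi_ok n i mu : 0 < i -> Mv n i mu -> Lv n i (Phi i mu) /\ Psi i (Phi i mu) = mu.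
Proof.
move=> hi [hs hpos hsum [A [B [hmu hsz]]]].
subst mu.
move: hs => /sorted_cat_mid [hsA hsB hAg hBl].
move: hpos; rewrite all_cat /= => /and3P[hAp _ hBp].
have hs2 : (size (A ++ i :: B) + i)./2 = size B + i.
  have e : size (A ++ i :: B) + i = (size B + i).*2.
    by rewrite size_cat /= hsz -addnn; lia'.
  by rewrite e doubleK.
rewrite /Phi hs2.
have hA : size A = (size B + i).-1 by rewrite hsz; lia'.
rewrite -hA take_size_cat //.
have hd : size B + i = size (A ++ [:: i]) by rewrite size_cat /= hsz; lia'.
have hmu2 : A ++ i :: B = (A ++ [:: i]) ++ B by rewrite -catA.
rewrite hd hmu2 drop_size_cat // -hmu2.
have [hszC hszR] := @split_size i A B hBp hBl hsB hsz hi.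
set C := (split i A B).1 in hszC *; set R := (split i A B).2 in hszR *.
have hsC : sorted geq C := splitC_sorted i hsA hsB.
have hsR : sorted geq R := splitR_sorted i B hsA.
have hCg : all (fun x => i < x) C := splitC_ge i hAg hBp.
have hRg : all (fun x => i <= x) R := splitR_ge i B hAg.
have hsum2 := split_sum hBp hBl hsB hsz hi; rewrite -/C -/R in hsum2.
set D := DofR i R.
have hDr : all (fun d => 0 < d <= i.-1) D := DofR_range i R.
have hsD : sorted geq D := DofR_sorted i R.
have hRD : RofD i D = R := RofD_DofR hsR hszR hRg.
have hDle : all (fun d => d <= i.-1) D by apply/allP => x hx; have := allP hDr x hx; lia'.
have hsRD := sumn_RofD hDle; rewrite hRD in hsRD.
set X := C ++ nseq i i ++ D.
have hperm : perm_eq (sort geq X) X by rewrite perm_sort.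
split.
  split.
  - by apply: sort_sorted; exact: geq_total.
  - rewrite (perm_all _ hperm) /X !all_cat; apply/and3P; split.
    + by apply/allP => x hx; have := allP hCg x hx; lia'.
    + by apply/allP => x /nseqP[-> _].
    + by apply/allP => x hx; have := allP hDr x hx; lia'.
  - rewrite (perm_sumn hperm) /X !sumn_cat sumn_nseq -hsum sumn_cat /=.
    move: hsum2 hsRD; clear; nia.
  - rewrite (permP hperm) /X !count_cat count_nseq /= eqxx mul1n.
    have -> : count_mem i C = 0.
      by apply/count_memPn/negP => hx; have := allP hCg i hx; lia'.
    have -> : count_mem i D = 0.
      by apply/count_memPn/negP => hx; have := allP hDr i hx; lia'.
    by rewrite addn0.
have hf1 : [seq x <- sort geq X | i < x] = C.
  rewrite filter_sort; [|exact: geq_total|exact: geq_tr].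
  rewrite /X !filter_cat filter_nseq ltnn mul0n /= (@filter_nil_all (fun x => i < x) D); last first.
    by apply/allP => x hx; have := allP hDr x hx; lia'.
  rewrite cats0 (all_filterP hCg).
  by apply: sorted_sort => //; exact: geq_tr.
have hf2 : [seq x <- sort geq X | x < i] = D.
  rewrite filter_sort; [|exact: geq_total|exact: geq_tr].
  rewrite /X !filter_cat filter_nseq ltnn mul0n /= (@filter_nil_all (fun x => x < i) C); last first.
    by apply/allP => x hx; have := allP hCg x hx; lia'.
  have hD' : [seq x <- D | x < i] = D.
    by apply/all_filterP/allP => x hx; have := allP hDr x hx; lia'.
  rewrite hD'.
  by apply: sorted_sort => //; exact: geq_tr.
have hfA : size A <= size C + i by rewrite hszC hsz; lia'.
by rewrite /Psi hf1 hf2 hRD /C /R merge_split.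
Qed.

Definition decode n (t : n.-tuple 'I_n.+1) : seq nat := [seq x <- parts_of t | 0 < x].
Definition encode n (s : seq nat) : n.-tuple 'I_n.+1 := [tuple (inord (nth 0 s j) : 'I_n.+1) | j < n].

Lemma parts_decomp n (t : n.-tuple 'I_n.+1) : is_partition t ->
  exists k, parts_of t = decode t ++ nseq k 0.
Proof.
case/andP => hs _; exists (count_mem 0 (parts_of t)).
rewrite {1}(@sorted_split_filter (fun x => 0 < x) _ _ hs); last by move=> x y hxy hy; lia'.
congr (_ ++ _); rewrite -filter_pred1_nseq; apply: eq_filter => x /=; lia'.
Qed.

Lemma path_nseq0 y k : path geq y (nseq k 0).
Proof. by elim: k y => //= k IH y; rewrite IH andbT. Qed.

Lemma sorted_cat0 s k : sorted geq s -> sorted geq (s ++ nseq k 0).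
Proof.
case: s => [|x s] /=; first by case: k => //= k; rewrite path_nseq0.
by move=> h; rewrite cat_path h path_nseq0.
Qed.

Lemma sumn_decode n (t : n.-tuple 'I_n.+1) : sumn (decode t) = sumn (parts_of t).
Proof. by rewrite /decode; elim: (parts_of t) => //= x s IH; case: ifP => /= h; rewrite IH //; lia'. Qed.

Lemma decode_Lv n i (t : n.-tuple 'I_n.+1) : 0 < i -> is_partition t ->
  [/\ sorted geq (decode t), all (fun x => 0 < x) (decode t), sumn (decode t) = n &
      count_mem i (decode t) = mult t i].
Proof.
move=> hi ht; have ht' := ht; case/andP: ht' => hs /eqP hsum.
split.
- exact: sorted_filter geq_tr _ _ hs.
- exact: filter_all.
- by rewrite sumn_decode.
- rewrite /mult /decode count_filter; apply: eq_count => x /=.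
  by case: eqP => // ->; rewrite hi.
Qed.

Lemma size_le_sumn s : all (fun x => 0 < x) s -> size s <= sumn s.
Proof. by elim: s => //= x s IH /andP[h1 h2]; have := IH h2; lia'. Qed.

Lemma elem_le_sumn s x : x \in s -> x <= sumn s.
Proof. by elim: s => //= y s IH; rewrite in_cons => /orP[/eqP ->|/IH]; lia'. Qed.

Lemma parts_encode n s : all (fun x => 0 < x) s -> sumn s = n ->
  parts_of (encode n s) = s ++ nseq (n - size s) 0.
Proof.
move=> hp hsum; have hsz : size s <= n by rewrite -hsum size_le_sumn.
apply: (@eq_from_nth _ 0).
  by rewrite /parts_of size_map size_tuple size_cat size_nseq subnKC.
move=> j; rewrite /parts_of size_map size_tuple => hj.
rewrite (nth_map ord0); last by rewrite size_tuple.
rewrite (_ : j = val (Ordinal hj)) // -tnth_nth tnth_mktuple /= inordK; last first.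
  case: (ltnP j (size s)) => hjs; last by rewrite nth_default.
  by rewrite ltnS -hsum elem_le_sumn // mem_nth.
rewrite nth_cat; case: ltnP => // hjs; rewrite nth_nseq nth_default //; by case: ifP.
Qed.

Lemma encode_ok n s : sorted geq s -> all (fun x => 0 < x) s -> sumn s = n ->
  is_partition (encode n s) /\ decode (encode n s) = s.
Proof.
move=> hs hp hsum; rewrite /is_partition /decode parts_encode //.
split.
  by rewrite sorted_cat0 //= sumn_cat sumn_nseq mul0n addn0 hsum eqxx.
rewrite filter_cat (all_filterP hp) (@filter_nil_all (fun x => 0 < x)) ?cats0 //.
by apply/allP => x /nseqP[-> _].
Qed.

Lemma encode_decode n (t : n.-tuple 'I_n.+1) : is_partition t -> encode n (decode t) = t.
Proof.
move=> ht; have [k hk] := parts_decomp ht.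
apply: eq_from_tnth => j; rewrite tnth_mktuple.
apply: val_inj => /=.
have e : nth 0 (decode t) j = val (tnth t j).
  rewrite (tnth_nth ord0) -(nth_map ord0 0 val); last by rewrite size_tuple.
  rewrite -/(parts_of t) hk nth_cat; case: ltnP => // h.
  by rewrite nth_default // nth_nseq; case: ifP.
by rewrite e inordK // ltn_ord.
Qed.

Lemma plength_decode n (t : n.-tuple 'I_n.+1) : plength t = size (decode t).
Proof. by rewrite /plength /decode size_filter. Qed.

Lemma part_decode n (t : n.-tuple 'I_n.+1) s : is_partition t -> s.-1 < size (decode t) ->
  part t s = nth 0 (decode t) s.-1.
Proof.
move=> ht hs; have [k hk] := parts_decomp ht.
by rewrite /part hk nth_cat hs.
Qed.

Lemma M_iff n i (t : n.-tuple 'I_n.+1) : 0 < i -> is_partition t ->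
  [exists s : 'I_n.+1, [&& 1 <= val s <= plength t,
                              hook1 t (val s) == val s & part t (val s) == i]] <->
  (exists A B, decode t = A ++ i :: B /\ size A = size B + i.-1).
Proof.
move=> hi ht; split.
  case/existsP => [[v hv]] /= /and3P[/andP[h1 h2] /eqP hh /eqP hp].
  rewrite plength_decode in h2.
  have hs1 : v.-1 < size (decode t) by lia'.
  rewrite /hook1 in hh; rewrite (part_decode ht hs1) in hh hp.
  rewrite plength_decode in hh.
  exists (take v.-1 (decode t)), (drop v (decode t)); split.
    rewrite -{1}(cat_take_drop v.-1 (decode t)) (drop_nth 0) //.
    by rewrite hp (_ : v.-1.+1 = v) //; lia'.
  rewrite size_take size_drop; case: ifP => h; lia'.
case=> A [B [hd hsz]].
have hP := decode_Lv (i:=i) hi ht; case: hP => _ hpos hsum _.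
have hle : size (decode t) <= n by rewrite -{2}hsum size_le_sumn.
have hsA : (size A).+1 < n.+1 by move: hle; rewrite hd size_cat /=; lia'.
apply/existsP; exists (Ordinal hsA) => /=.
rewrite /hook1 !part_decode // ?plength_decode hd ?nth_cat ?ltnn ?subnn //= ?size_cat /=;
  try lia'.
Qed.

Lemma L_Lv n i (t : n.-tuple 'I_n.+1) : 0 < i ->
  (is_partition t && (mult t i == i)) -> Lv n i (decode t).
Proof.
move=> hi /andP[ht /eqP hm]; have [h1 h2 h3 h4] := decode_Lv (i:=i) hi ht.
by split => //; rewrite h4.
Qed.

Lemma M_Mv n i (t : n.-tuple 'I_n.+1) : 0 < i ->
  (is_partition t && [exists s : 'I_n.+1, [&& 1 <= val s <= plength t,
                              hook1 t (val s) == val s & part t (val s) == i]]) -> Mv n i (decode t).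
Proof.
move=> hi /andP[ht hex]; have [h1 h2 h3 _] := decode_Lv (i:=i) hi ht.
by split => //; apply/(M_iff hi ht).
Qed.

Theorem proposition2p3 (n i : nat) (hn : 1 <= n) (hi : 1 <= i) :
  #|[set l : n.-tuple 'I_n.+1 | is_partition l && (mult l i == i)]| =
  #|[set m : n.-tuple 'I_n.+1 | is_partition m &&
      [exists s : 'I_n.+1, [&& 1 <= val s <= plength m,
                              hook1 m (val s) == val s & part m (val s) == i]]]|.
Proof.
set L := [set l : n.-tuple 'I_n.+1 | _].
set M := [set m : n.-tuple 'I_n.+1 | _].
pose G (t : n.-tuple 'I_n.+1) := encode n (Psi i (decode t)).
pose F (t : n.-tuple 'I_n.+1) := encode n (Phi i (decode t)).
have GM : forall t, t \in L -> G t \in M /\ F (G t) = t.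
  move=> t; rewrite inE => htL.
  have hLv := L_Lv hi htL.
  have [hMv hPP] := Psi_ok hi hLv.
  case: (hMv) => hs hp hsum hex.
  have [hpart hdec] := encode_ok hs hp hsum.
  split.
    rewrite inE hpart /=; apply/(M_iff hi hpart); rewrite /G hdec; exact: hex.
  rewrite /F /G hdec hPP encode_decode //; by case/andP: htL.
have FL : forall t, t \in M -> F t \in L /\ G (F t) = t.
  move=> t; rewrite inE => htM.
  have hMv := M_Mv hi htM.
  have [hLv hPP] := Phi_ok hi hMv.
  case: (hLv) => hs hp hsum hcnt.
  have [hpart hdec] := encode_ok hs hp hsum.
  split.
    rewrite inE hpart /=; have [_ _ _ h4] := decode_Lv (i:=i) hi hpart.
    by rewrite -h4 /F hdec hcnt.
  rewrite /F /G hdec hPP encode_decode //; by case/andP: htM.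
apply/eqP; rewrite eqn_leq; apply/andP; split.
  have inj : {in L &, injective G}.
    by apply: (can_in_inj (g := F)) => t ht; have [] := GM t ht.
  rewrite -(card_in_imset inj); apply: subset_leq_card.
  by apply/subsetP => x /imsetP[t ht ->]; have [] := GM t ht.
have inj : {in M &, injective F}.
  by apply: (can_in_inj (g := G)) => t ht; have [] := FL t ht.
rewrite -(card_in_imset inj); apply: subset_leq_card.
by apply/subsetP => x /imsetP[t ht ->]; have [] := FL t ht.
Qed.
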